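(* For a restless bandit as in the context, every stationary policy $u$, every $S\subseteq N^{\{0,1\}}$ and every initial state $i\in N$, $$b^u_i+\sum_{j\in S}w^S_j\,x^{0,u}_{ij}=b^S_i+\sum_{j\in N^{\{0,1\}}\setminus S}w^S_j\,x^{1,u}_{ij}.$$
   Context: Restless bandit: finite state space $N=N^{\{0,1\}}\cup N^{\{1\}}$ (disjoint); actions $a\in\{0,1\}$; transition probabilities $p^a_{ij}$ with $p^1_{ij}=p^0_{ij}$ for $i\in N^{\{1\}}$; discount factor $\beta\in(0,1)$; activity weights $\theta^1_j>0$. Stationary policies $u:N\to[0,1]$ (probability of the active action) with $u(i)=1$ on $N^{\{1\}}$. With $X(t),a(t)$ state and action at period $t$: $b^u_i=E^u_i[\sum_{t\ge0}\theta^1_{X(t)}a(t)\beta^t]$, $x^{a,u}_{ij}=E^u_i[\sum_{t\ge0}1\{X(t)=j,a(t)=a\}\beta^t]$. For $S\subseteq N^{\{0,1\}}$ the $S$-active policy is active on $S\cup N^{\{1\}}$ and passive elsewhere; $b^S_i$ its activity measure. Marginal workloads: $w^S_i=\theta^1_i1\{i\in N^{\{0,1\}}\}+\beta\sum_{j\in N}(p^1_{ij}-p^0_{ij})b^S_j$. *)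

(* Defs.v *)
From HB Require Import structures.
From mathcomp Require Import all_boot all_order all_algebra.
From mathcomp Require Import all_classical all_reals all_analysis.
Set Implicit Arguments. Unset Strict Implicit. Unset Printing Implicit Defensive.
Import Order.TTheory GRing.Theory Num.Theory numFieldNormedType.Exports.
Local Open Scope ring_scope.

Section RB.
Variables (R : realType) (T : finType).

(* Restless bandit data:
   - N1 : {set T} is N^{1}; N^{0,1} is its complement ~: N1;
   - p a i j : transition probability p^a_{ij} (a = true is active, 1);
   - beta : discount factor; theta j : activity weight theta^1_j. *)

Definition dsum (f : nat -> R) : R := limn (series f).

(* One-step transition matrix of the state process under the stationary
   randomized policy u (u i = probability of choosing the active action). *)
Definition polP (p : bool -> T -> T -> R) (u : T -> R) (i j : T) : R :=
  u i * p true i j + (1 - u i) * p false i j.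

Fixpoint polPt (p : bool -> T -> T -> R) (u : T -> R) (t : nat) (i j : T) : R :=
  match t with
  | 0 => (i == j)%:R
  | t'.+1 => \sum_(k : T) polPt p u t' i k * polP p u k j
  end.

Definition actprob (u : T -> R) (a : bool) (j : T) : R :=
  if a then u j else 1 - u j.

(* x^{a,u}_{ij} = E^u_i [ sum_t 1{X(t)=j, a(t)=a} beta^t ]
               = sum_t beta^t P^u_i{X(t)=j, a(t)=a}. *)
Definition occ (p : bool -> T -> T -> R) (beta : R) (u : T -> R)
  (a : bool) (i j : T) : R :=
  dsum (fun t => beta ^+ t * (polPt p u t i j * actprob u a j)).

(* b^u_i = E^u_i [ sum_t theta^1_{X(t)} a(t) beta^t ]
         = sum_t beta^t sum_j theta_j P^u_i{X(t)=j, a(t)=1}. *)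
Definition actmeas (p : bool -> T -> T -> R) (beta : R) (theta : T -> R)
  (u : T -> R) (i : T) : R :=
  dsum (fun t => beta ^+ t * \sum_(j : T) theta j * (polPt p u t i j * u j)).

Definition Sactive (N1 S : {set T}) : T -> R :=
  fun j => if (j \in S) || (j \in N1) then 1 else 0.

Definition bS (p : bool -> T -> T -> R) (beta : R) (theta : T -> R)
  (N1 S : {set T}) (i : T) : R :=
  actmeas p beta theta (Sactive N1 S) i.

Definition workload (p : bool -> T -> T -> R) (beta : R) (theta : T -> R)
  (N1 S : {set T}) (i : T) : R :=
  (if i \in N1 then 0 else theta i)
  + beta * \sum_(j : T) (p true i j - p false i j) * bS p beta theta N1 S j.

End RB.

(* Main.v *)
Require Import Defs.
From HB Require Import structures.
From mathcomp Require Import all_boot all_order all_algebra.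
From mathcomp Require Import all_classical all_reals all_analysis.
From mathcomp Require Import ring lra.
Import Order.TTheory GRing.Theory Num.Theory numFieldNormedType.Exports.
Local Open Scope ring_scope.
Local Open Scope classical_set_scope.

Section Aux.
Variables (R : realType) (T : finType) (p : bool -> T -> T -> R).
Hypothesis p_ge0 : forall a i j, 0 <= p a i j.
Hypothesis p_sum1 : forall a i, \sum_(j : T) p a i j = 1.

Lemma polP_ge0 (v : T -> R) : (forall i, 0 <= v i) -> (forall i, v i <= 1) ->
  forall i j, 0 <= polP p v i j.
Proof.
move=> v0 v1 i j; rewrite /polP.
by rewrite addr_ge0 // mulr_ge0 // subr_ge0.
Qed.

Lemma polP_sum1 (v : T -> R) i : \sum_j polP p v i j = 1.
Proof.
rewrite /polP big_split /= -!mulr_sumr !p_sum1; ring.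
Qed.

Lemma polPt_ge0 (v : T -> R) : (forall i, 0 <= v i) -> (forall i, v i <= 1) ->
  forall t i j, 0 <= polPt p v t i j.
Proof.
move=> v0 v1; elim=> [|t IH] i j /=; first by case: (i == j).
by apply: sumr_ge0 => k _; rewrite mulr_ge0 // polP_ge0.
Qed.

Lemma polPt_sum1 (v : T -> R) t i : \sum_j polPt p v t i j = 1.
Proof.
elim: t => [|t IH] /=.
  by rewrite (bigD1 i) //= eqxx big1 ?addr0 // => j /negbTE; rewrite eq_sym => ->.
rewrite exchange_big /=; rewrite -IH; apply: eq_bigr => k _.
by rewrite -mulr_sumr polP_sum1 mulr1.
Qed.

Lemma polPt_le1 (v : T -> R) : (forall i, 0 <= v i) -> (forall i, v i <= 1) ->
  forall t i j, `|polPt p v t i j| <= 1.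
Proof.
move=> v0 v1 t i j; rewrite ger0_norm ?polPt_ge0 //.
rewrite -(polPt_sum1 v t i) (bigD1 j) //= lerDl sumr_ge0 // => k _.
exact: polPt_ge0.
Qed.

Lemma polPtS_l (v : T -> R) t i j :
  polPt p v t.+1 i j = \sum_k polP p v i k * polPt p v t k j.
Proof.
elim: t i j => [|t IH] i j.
  rewrite /= (bigD1 i) //= eqxx mul1r big1 ?addr0; last first.
    by move=> k /negbTE; rewrite eq_sym => ->; rewrite mul0r.
  rewrite (bigD1 j) //= eqxx mulr1 big1 ?addr0 // => k /negbTE ->.
  by rewrite mulr0.
have -> : polPt p v t.+2 i j = \sum_k polPt p v t.+1 i k * polP p v k j by [].
under eq_bigr do rewrite IH mulr_suml.
rewrite exchange_big /=; apply: eq_bigr => k _.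
by rewrite /= mulr_sumr; apply: eq_bigr => m _; rewrite mulrA.
Qed.

End Aux.

Lemma series_bounded_cvg (R : realType) (beta : R) (h : nat -> R) (M : R) :
  0 < beta -> beta < 1 -> (forall t, `|h t| <= M) ->
  cvgn (series (fun t => beta ^+ t * h t)).
Proof.
move=> b0 b1 hM.
have M0 : 0 <= M by apply: le_trans (hM 0%N).
have nb : `|beta| < 1 by rewrite ger0_norm ?ltW.
have cg : cvgn (series (fun t => beta ^+ t * (h t + M))).
  apply: (@series_le_cvg _ _ (geometric (M + M) beta)).
  - move=> n; apply: mulr_ge0; first exact: exprn_ge0 (ltW b0).
    by have := hM n; rewrite ler_norml => /andP[? _]; lra.
  - by move=> n; apply: geometric_ge0; [lra | exact: ltW].
  - move=> n; rewrite /geometric /= mulrC; apply: ler_wpM2r; first exact: exprn_ge0 (ltW b0).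
    by have := hM n; rewrite ler_norml => /andP[_ ?]; lra.
  - exact: is_cvg_geometric_series.
have -> : (fun t => beta ^+ t * h t) =
  (fun t => beta ^+ t * (h t + M)) - geometric M beta.
  apply/funext => t; change (beta ^+ t * h t = beta ^+ t * (h t + M) - M * beta ^+ t); ring.
exact: is_cvg_seriesB cg (@is_cvg_geometric_series _ M _ nb).
Qed.

Section Main.
Variables (R : realType) (T : finType) (p : bool -> T -> T -> R) (beta : R) (theta : T -> R).
Hypothesis p_ge0 : forall a i j, 0 <= p a i j.
Hypothesis p_sum1 : forall a i, \sum_(j : T) p a i j = 1.
Hypothesis beta_gt0 : 0 < beta.
Hypothesis beta_lt1 : beta < 1.

Lemma sum_cvg (I : finType) (P : pred I) (F : I -> nat -> R) (L : I -> R) :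
  (forall j, F j n @[n --> \oo] --> L j) ->
  \sum_(j | P j) F j n @[n --> \oo] --> \sum_(j | P j) L j.
Proof.
move=> H; apply: cvg_big => //.
exact: add_continuous.
Qed.

Lemma actmeas_cvg (v : T -> R) : (forall i, 0 <= v i) -> (forall i, v i <= 1) ->
  forall i, series (fun t => beta ^+ t * \sum_j theta j * (polPt p v t i j * v j))
    @ \oo --> actmeas p beta theta v i.
Proof.
move=> v0 v1 i.
apply: (@series_bounded_cvg _ _ _ (\sum_j `|theta j|)) => // t.
apply: le_trans (ler_norm_sum _ _ _) _; apply: ler_sum => j _.
rewrite normrM ler_piMr // normrM.
rewrite -(mul1r 1) ler_pM //; first exact: polPt_le1.
by rewrite ger0_norm.
Qed.

Lemma occ_cvg (v : T -> R) : (forall i, 0 <= v i) -> (forall i, v i <= 1) ->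
  forall a i j, series (fun t => beta ^+ t * (polPt p v t i j * actprob v a j))
    @ \oo --> occ p beta v a i j.
Proof.
move=> v0 v1 a i j.
apply: (@series_bounded_cvg _ _ _ 1) => // t.
rewrite normrM -(mul1r 1) ler_pM //; first exact: polPt_le1.
by case: a => /=; rewrite ger0_norm ?subr_ge0 // lerBlDr lerDl.
Qed.

Lemma bellman (v : T -> R) : (forall i, 0 <= v i) -> (forall i, v i <= 1) ->
  forall j, actmeas p beta theta v j =
    theta j * v j + beta * \sum_k polP p v j k * actmeas p beta theta v k.
Proof.
move=> v0 v1 j.
pose f m t := beta ^+ t * \sum_k theta k * (polPt p v t m k * v k).
have E n : series (f j) n.+1 = theta j * v j + beta * \sum_m polP p v j m * series (f m) n.
  rewrite /series /= big_nat_recl //; congr (_ + _).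
    rewrite /f expr0 mul1r /= (bigD1 j) //= eqxx mul1r big1 ?addr0 //.
    by move=> k /negbTE; rewrite eq_sym => ->; rewrite mul0r mulr0.
  rewrite (eq_bigr (fun t => beta * \sum_m polP p v j m * f m t)); last first.
    move=> t _.
    have K : \sum_k theta k * (polPt p v t.+1 j k * v k) =
        \sum_m polP p v j m * \sum_k theta k * (polPt p v t m k * v k).
      under eq_bigr do rewrite polPtS_l mulr_suml mulr_sumr.
      rewrite exchange_big /=; apply: eq_bigr => m _.
      rewrite !mulr_sumr; apply: eq_bigr => k _; ring.
    rewrite /f K exprS -mulrA; congr (_ * _).
    rewrite mulr_sumr; apply: eq_bigr => m _; ring.
  rewrite -mulr_sumr exchange_big /=; congr (_ * _); apply: eq_bigr => m _.
  by rewrite mulr_sumr.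
have H1 : (fun n => series (f j) n.+1) @ \oo --> actmeas p beta theta v j.
  by rewrite (cvg_shiftS (series (f j))); exact: actmeas_cvg.
have H2 : (fun n => series (f j) n.+1) @ \oo -->
    theta j * v j + beta * \sum_k polP p v j k * actmeas p beta theta v k.
  under eq_cvg do rewrite E.
  apply: cvgD; first exact: cvg_cst.
  apply: cvgMl_tmp; apply: sum_cvg => m.
  by apply: cvgMl_tmp; exact: actmeas_cvg.
exact: (cvg_unique _ H1 H2).
Qed.

End Main.

Theorem proposition4 (R : realType) (T : finType) (N1 : {set T})
  (p : bool -> T -> T -> R) (beta : R) (theta : T -> R)
  (p_ge0 : forall a i j, 0 <= p a i j)
  (p_sum1 : forall a i, \sum_(j : T) p a i j = 1)
  (p_N1 : forall i j, i \in N1 -> p true i j = p false i j)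
  (beta_gt0 : 0 < beta) (beta_lt1 : beta < 1)
  (theta_gt0 : forall j, 0 < theta j)
  (u : T -> R) (u_ge0 : forall i, 0 <= u i) (u_le1 : forall i, u i <= 1)
  (u_N1 : forall i, i \in N1 -> u i = 1)
  (S : {set T}) (HS : S \subset ~: N1) (i : T) :
  actmeas p beta theta u i
    + \sum_(j in S) workload p beta theta N1 S j * occ p beta u false i j
  = bS p beta theta N1 S i
    + \sum_(j in ~: N1 :\: S) workload p beta theta N1 S j * occ p beta u true i j.
Proof.
set b := bS p beta theta N1 S.
set s := @Sactive R T N1 S.
set w := workload p beta theta N1 S.
have s0 j : 0 <= s j by rewrite /s /Sactive; case: ifP.
have s1 j : s j <= 1 by rewrite /s /Sactive; case: ifP.
have Bell := @bellman R T p beta theta p_ge0 p_sum1 beta_gt0 beta_lt1 s s0 s1.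
pose Q (a : bool) j := (if a then theta j else 0) + beta * \sum_k p a j k * b k.
have bQ j : b j = Q ((j \in S) || (j \in N1)) j.
  rewrite /b /bS -/s Bell /Q /polP.
  have : s j = if (j \in S) || (j \in N1) then 1 else 0 by [].
  case: ((j \in S) || (j \in N1)) => ->; rewrite ?mulr1 ?mulr0;
    congr (_ + beta * _); apply: eq_bigr => k _; congr (_ * _); ring.
have wQ j : j \notin N1 -> w j = Q true j - Q false j.
  move=> jN; rewrite /w /workload (negbTE jN) /Q -/b.
  under eq_bigr do rewrite mulrBl.
  rewrite sumrB; ring.
pose g j := theta j * u j + beta * \sum_k polP p u j k * b k.
have gQ j : g j = u j * Q true j + (1 - u j) * Q false j.
  rewrite /g /Q /polP.
  under eq_bigr do rewrite mulrDl -!mulrA.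
  rewrite big_split -!mulr_sumr /=; ring.
have d j : g j - b j = (if j \in S then - (w j * (1 - u j)) else 0)
    + (if j \in ~: N1 :\: S then w j * u j else 0).
  rewrite gQ bQ !inE.
  case jS: (j \in S) => /=.
    have jN : j \notin N1 by have := fintype.subsetP HS j jS; rewrite inE.
    by rewrite wQ //; ring.
  case jN: (j \in N1) => /=.
    by rewrite u_N1 //; ring.
  by rewrite wQ ?jN //; ring.
pose a t := beta ^+ t * \sum_j theta j * (polPt p u t i j * u j).
pose X (c : bool) j t := beta ^+ t * (polPt p u t i j * actprob u c j).
pose E n := beta ^+ n * \sum_k polPt p u n i k * b k.
have step t : beta ^+ t * \sum_j polPt p u t i j * (g j - b j) = a t + (E t.+1 - E t).
  have Pt k : polPt p u t.+1 i k = \sum_j polPt p u t i j * polP p u j k by [].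
  have K : \sum_k polPt p u t.+1 i k * b k =
      \sum_j polPt p u t i j * \sum_k polP p u j k * b k.
    under eq_bigr do rewrite Pt mulr_suml.
    rewrite exchange_big /=; apply: eq_bigr => j _.
    rewrite mulr_sumr; apply: eq_bigr => k _; ring.
  have K2 : \sum_j polPt p u t i j * (g j - b j) =
      \sum_j theta j * (polPt p u t i j * u j)
      + beta * \sum_j polPt p u t i j * \sum_k polP p u j k * b k
      - \sum_j polPt p u t i j * b j.
    rewrite /g; under eq_bigr do rewrite mulrBr mulrDr.
    rewrite sumrB big_split /= mulr_sumr; congr (_ + _ - _); apply: eq_bigr => j _; ring.
  rewrite /a /E K K2 exprS; ring.
have step2 t : beta ^+ t * \sum_j polPt p u t i j * (g j - b j) =
    - \sum_(j in S) w j * X false j t + \sum_(j in ~: N1 :\: S) w j * X true j t.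
  under eq_bigr do rewrite d.
  rewrite [\sum_(j in S) _]big_mkcond [\sum_(j in ~: N1 :\: S) _]big_mkcond /=.
  rewrite -sumrN -big_split mulr_sumr; apply: eq_bigr => j _; rewrite /X /=.
  by case: ifP => _; case: ifP => _; ring.
have E0 : E 0%N = b i.
  rewrite /E expr0 mul1r /= (bigD1 i) //= eqxx mul1r big1 ?addr0 //.
  by move=> k /negbTE; rewrite eq_sym => ->; rewrite mul0r.
have fin n : series a n + \sum_(j in S) w j * series (X false j) n =
    b i + \sum_(j in ~: N1 :\: S) w j * series (X true j) n - E n.
  have H : \sum_(0 <= t < n) beta ^+ t * \sum_j polPt p u t i j * (g j - b j)
      = series a n + (E n - E 0%N).
    under eq_bigr do rewrite step.
    by rewrite big_split /= telescope_sumr.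
  have H' : \sum_(0 <= t < n) beta ^+ t * \sum_j polPt p u t i j * (g j - b j)
      = - \sum_(j in S) w j * series (X false j) n
        + \sum_(j in ~: N1 :\: S) w j * series (X true j) n.
    under eq_bigr do rewrite step2.
    rewrite big_split /= sumrN; congr (- _ + _); rewrite exchange_big /=;
      apply: eq_bigr => j _; by rewrite /series /= mulr_sumr.
  move: H; rewrite H' E0 => H; lra.
have L1 : (fun n => series a n + \sum_(j in S) w j * series (X false j) n) @ \oo -->
    actmeas p beta theta u i + \sum_(j in S) w j * occ p beta u false i j.
  apply: cvgD; first exact: (@actmeas_cvg R T p beta theta p_ge0 p_sum1 beta_gt0 beta_lt1 u u_ge0 u_le1 i).
  apply: (@sum_cvg R) => j; apply: cvgMl_tmp.
  exact: (@occ_cvg R T p beta p_ge0 p_sum1 beta_gt0 beta_lt1 u u_ge0 u_le1 false i j).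
have E_0 : E n @[n --> \oo] --> 0.
  apply: cvg_series_cvg_0.
  apply: (@series_bounded_cvg _ _ _ (\sum_k `|b k|)) => // t.
  apply: le_trans (ler_norm_sum _ _ _) _; apply: ler_sum => k _.
  rewrite normrM ler_piMl //.
  exact: (@polPt_le1 R T p p_ge0 p_sum1 u u_ge0 u_le1).
have L2 : (fun n => series a n + \sum_(j in S) w j * series (X false j) n) @ \oo -->
    b i + \sum_(j in ~: N1 :\: S) w j * occ p beta u true i j - 0.
  under eq_cvg do rewrite fin.
  apply: cvgB => //; apply: cvgD; first exact: cvg_cst.
  apply: (@sum_cvg R) => j; apply: cvgMl_tmp.
  exact: (@occ_cvg R T p beta p_ge0 p_sum1 beta_gt0 beta_lt1 u u_ge0 u_le1 true i j).
rewrite subr0 in L2.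
exact: (cvg_unique _ L1 L2).
Qed.
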